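(* Let $\mathcal{P}=(\mathcal{P},m,\Delta,\delta)$ be a double twisted bialgebra and $\mathcal{Q}$ a species. The formula $\phi\leftarrow f=(\phi\otimes f)\circ\delta$ (i.e. $(\phi\leftarrow f)[A](x)=\sum f[A](x'')\phi[A](x')$ where $\delta_A(x)=\sum x'\otimes x''$) defines a right action of the monoid $M_{\mathcal{P}}=(\mathrm{Char}(\mathcal{P}),\star)$ on the set $\mathrm{Mor}(\mathcal{P},\mathcal{Q})$ of species morphisms $\mathcal{P}\to\mathcal{Q}$; in particular $(\phi\leftarrow f)\leftarrow g=\phi\leftarrow(f\star g)$. Moreover: (1) if $\mathcal{Q}$ is a twisted algebra, the set $\mathrm{Mor}_A(\mathcal{P},\mathcal{Q})$ of twisted algebra morphisms is stable under this action; (2) if $\mathcal{Q}$ is a twisted coalgebra, the set $\mathrm{Mor}_C(\mathcal{P},\mathcal{Q})$ of twisted coalgebra morphisms is stable under this action; (3) if $\mathcal{Q}$ is a twisted bialgebra, the set $\mathrm{Mor}_B(\mathcal{P},\mathcal{Q})$ of twisted bialgebra morphisms is stable under this action.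
   Context: Work over a field $\mathbb{K}$. Species, twisted algebras (natural associative $m_{A,B}:\mathcal{P}[A]\otimes\mathcal{P}[B]\to\mathcal{P}[A\sqcup B]$ with unit $1_{\mathcal{P}}$), twisted coalgebras (natural coassociative $\Delta_{A,B}:\mathcal{P}[A\sqcup B]\to\mathcal{P}[A]\otimes\mathcal{P}[B]$ with counit $\varepsilon$) and twisted bialgebras are taken in the category of species with the Cauchy product; morphisms are natural families of linear maps compatible with the structures. A double twisted bialgebra is $(\mathcal{P},m,\Delta,\delta)$ with: (i) $(\mathcal{P},m,\Delta)$ a twisted bialgebra with counit $\varepsilon$; (ii) for each finite set $A$ a coassociative coproduct $\delta_A:\mathcal{P}[A]\to\mathcal{P}[A]\otimes\mathcal{P}[A]$ with counit $\varepsilon'_A$, natural in bijections; (iii) $\delta$ multiplicative ($\delta(xy)=\sum x'y'\otimes x''y''$, $\delta_\emptyset(1)=1\otimes1$); (iv) $(\Delta_{A,B}\otimes Id)\circ\delta_{A\sqcup B}=m_{1,3,24}\circ(\delta_A\otimes\delta_B)\circ\Delta_{A,B}$ with $m_{1,3,24}(x\otimes y\otimes z\otimes t)=x\otimes z\otimes m_{A,B}(y\otimes t)$; (v) $(\varepsilon\otimes Id)\delta_\emptyset(x)=\varepsilon(x)1_{\mathcal{P}}$ for $x\in\mathcal{P}[\emptyset]$. $\mathrm{Char}(\mathcal{P})$ is the set of characters: natural families of linear forms $f[A]:\mathcal{P}[A]\to\mathbb{K}$ with $f(xy)=f(x)f(y)$ and $f(1_{\mathcal{P}})=1$. The product $\star$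 is $(f\star g)(x)=\sum f(x')g(x'')$ where $\delta_A(x)=\sum x'\otimes x''$; $(\mathrm{Char}(\mathcal{P}),\star)$ is a monoid with unit $\varepsilon'$. *)

(* Defs.v *)
(* Conventions:
   - finite sets = finTypes; disjoint union A ⊔ B = sum type (A + B); ∅ = void;
   - a species is a family P[A] of K-vector spaces (lmodType K) with a relabelling
     map for every function A -> B, subject to the functor laws for bijections only
     (values on non-bijective maps are irrelevant junk);
   - an element of U ⊗ V is represented by a finite formal sum (seq (U * V));
     two formal sums are equal in U ⊗ V iff every bilinear map out of U × V
     (into any K-vector space) takes the same summed value on them (universal
     property of the tensor product).  Same for triple tensors. *)
From HB Require Import structures.
From mathcomp Require Import all_boot all_algebra.
Set Implicit Arguments. Unset Strict Implicit. Unset Printing Implicit Defensive.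
Import GRing.Theory.
Local Open Scope ring_scope.

Section TwistedBialgebras.
Variable K : fieldType.

Definition bilin (U V W : lmodType K) (b : U -> V -> W) : Prop :=
  (forall v, linear (fun u => b u v)) /\ (forall u, linear (b u)).

Definition trilin (U V W X : lmodType K) (b : U -> V -> W -> X) : Prop :=
  [/\ forall v w, linear (fun u => b u v w),
      forall u w, linear (fun v => b u v w) &
      forall u v, linear (b u v)].

Definition teq (U V : lmodType K) (t1 t2 : seq (U * V)) : Prop :=
  forall (W : lmodType K) (b : U -> V -> W), bilin b ->
    \sum_(p <- t1) b p.1 p.2 = \sum_(p <- t2) b p.1 p.2.

Definition teq3 (U V W : lmodType K) (t1 t2 : seq (U * V * W)) : Prop :=
  forall (X : lmodType K) (b : U -> V -> W -> X), trilin b ->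
    \sum_(p <- t1) b p.1.1 p.1.2 p.2 = \sum_(p <- t2) b p.1.1 p.1.2 p.2.

Definition tscale (U V : lmodType K) (a : K) (t : seq (U * V)) : seq (U * V) :=
  [seq (a *: p.1, p.2) | p <- t].

Definition sumf (A A' B B' : Type) (s : A -> A') (t : B -> B') : A + B -> A' + B' :=
  fun z => match z with inl a => inl (s a) | inr b => inr (t b) end.

Definition sum_assoc (A B C : Type) : (A + B) + C -> A + (B + C) :=
  fun z => match z with
           | inl (inl a) => inl a
           | inl (inr b) => inr (inl b)
           | inr c => inr (inr c) end.

Definition sum_mid (A1 A2 B1 B2 : Type) : (A1 + A2) + (B1 + B2) -> (A1 + B1) + (A2 + B2) :=
  fun z => match z with
           | inl (inl a1) => inl (inl a1)
           | inl (inr a2) => inr (inl a2)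
           | inr (inl b1) => inl (inr b1)
           | inr (inr b2) => inr (inr b2) end.

Definition sum_void_l (A : Type) : void + A -> A :=
  fun z => match z with inl v => match v with end | inr a => a end.

Definition sum_void_r (A : Type) : A + void -> A :=
  fun z => match z with inl a => a | inr v => match v with end end.

Record species := Species {
  sp_obj :> finType -> lmodType K;
  relab : forall A B : finType, (A -> B) -> sp_obj A -> sp_obj B;
  relab_linear : forall (A B : finType) (s : A -> B), bijective s -> linear (relab s);
  relab_id : forall (A : finType) (x : sp_obj A), relab (@id A) x = x;
  relab_comp : forall (A B C : finType) (s : A -> B) (t : B -> C),
      bijective s -> bijective t -> forall x, relab (t \o s) x = relab t (relab s x)
}.

Record twisted_algebra (P : species) := TwAlg {
  tmul : forall A B : finType, P A -> P B -> P (A + B)%type;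
  tone : P void;
  tmul_bilin : forall A B : finType, bilin (@tmul A B);
  tmul_natural : forall (A A' B B' : finType) (s : A -> A') (t : B -> B'),
      bijective s -> bijective t -> forall (x : P A) (y : P B),
      tmul (relab s x) (relab t y) = relab (sumf s t) (tmul x y);
  tmul_assoc : forall (A B C : finType) (x : P A) (y : P B) (z : P C),
      tmul x (tmul y z) = relab (@sum_assoc A B C) (tmul (tmul x y) z);
  tmul_1l : forall (A : finType) (x : P A), relab (@sum_void_l A) (tmul tone x) = x;
  tmul_1r : forall (A : finType) (x : P A), relab (@sum_void_r A) (tmul x tone) = x
}.

Record twisted_coalgebra (P : species) := TwCoalg {
  tcop : forall A B : finType, P (A + B)%type -> seq (P A * P B);
  tcounit : P void -> K;
  tcop_linear : forall (A B : finType) (a : K) (x y : P (A + B)%type),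
      teq (tcop (a *: x + y)) (tscale a (tcop x) ++ tcop y);
  tcop_natural : forall (A A' B B' : finType) (s : A -> A') (t : B -> B'),
      bijective s -> bijective t -> forall x : P (A + B)%type,
      teq (tcop (relab (sumf s t) x)) [seq (relab s p.1, relab t p.2) | p <- tcop x];
  tcop_coassoc : forall (A B C : finType) (x : P ((A + B) + C)%type),
      teq3 (flatten [seq [seq (q.1, q.2, p.2) | q <- tcop p.1] | p <- tcop x])
           (flatten [seq [seq (p.1, q.1, q.2) | q <- tcop p.2]
                        | p <- tcop (relab (@sum_assoc A B C) x)]);
  tcounit_linear : scalar tcounit;
  tcounit_l : forall (A : finType) (x : P A),
      \sum_(p <- tcop (relab (@inr void A) x)) tcounit p.1 *: p.2 = x;
  tcounit_r : forall (A : finType) (x : P A),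
      \sum_(p <- tcop (relab (@inl A void) x)) tcounit p.2 *: p.1 = x
}.

Record twisted_bialgebra (P : species) := TwBialg {
  tb_alg :> twisted_algebra P;
  tb_coalg : twisted_coalgebra P;
  tb_cop_mul : forall (A1 A2 B1 B2 : finType) (x : P (A1 + A2)%type) (y : P (B1 + B2)%type),
      teq (tcop tb_coalg (relab (@sum_mid A1 A2 B1 B2) (tmul tb_alg x y)))
          [seq (tmul tb_alg p.1 q.1, tmul tb_alg p.2 q.2)
             | p <- tcop tb_coalg x, q <- tcop tb_coalg y];
  tb_cop_one : teq (tcop tb_coalg (relab (@inl void void) (tone tb_alg)))
                   [:: (tone tb_alg, tone tb_alg)];
  tb_counit_mul : forall x y : P void,
      tcounit tb_coalg (relab (@sum_void_l void) (tmul tb_alg x y))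
      = tcounit tb_coalg x * tcounit tb_coalg y;
  tb_counit_one : tcounit tb_coalg (tone tb_alg) = 1
}.

Record double_twisted_bialgebra (P : species) := DTB {
  dtb_bialg :> twisted_bialgebra P;
  dcop : forall A : finType, P A -> seq (P A * P A);
  dcounit : forall A : finType, P A -> K;
  dcop_linear : forall (A : finType) (a : K) (x y : P A),
      teq (dcop (a *: x + y)) (tscale a (dcop x) ++ dcop y);
  dcop_natural : forall (A B : finType) (s : A -> B), bijective s -> forall x : P A,
      teq (dcop (relab s x)) [seq (relab s p.1, relab s p.2) | p <- dcop x];
  dcop_coassoc : forall (A : finType) (x : P A),
      teq3 (flatten [seq [seq (q.1, q.2, p.2) | q <- dcop p.1] | p <- dcop x])
           (flatten [seq [seq (p.1, q.1, q.2) | q <- dcop p.2] | p <- dcop x]);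
  dcounit_linear : forall A : finType, scalar (@dcounit A);
  dcounit_l : forall (A : finType) (x : P A), \sum_(p <- dcop x) dcounit p.1 *: p.2 = x;
  dcounit_r : forall (A : finType) (x : P A), \sum_(p <- dcop x) dcounit p.2 *: p.1 = x;
  dcop_mul : forall (A B : finType) (x : P A) (y : P B),
      teq (dcop (tmul dtb_bialg x y))
          [seq (tmul dtb_bialg p.1 q.1, tmul dtb_bialg p.2 q.2) | p <- dcop x, q <- dcop y];
  dcop_one : teq (dcop (tone dtb_bialg)) [:: (tone dtb_bialg, tone dtb_bialg)];
  dcop_cop : forall (A B : finType) (x : P (A + B)%type),
      teq3 (flatten [seq [seq (q.1, q.2, p.2) | q <- tcop (tb_coalg dtb_bialg) p.1]
                       | p <- dcop x])
           (flatten [seq [seq (q.1, r.1, tmul dtb_bialg q.2 r.2) | q <- dcop p.1, r <- dcop p.2]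
                       | p <- tcop (tb_coalg dtb_bialg) x]);
  dcounit_eps : forall x : P void,
      \sum_(p <- dcop x) tcounit (tb_coalg dtb_bialg) p.1 *: p.2
      = tcounit (tb_coalg dtb_bialg) x *: tone dtb_bialg
}.

Definition is_char (P : species) (M : twisted_algebra P) (f : forall A : finType, P A -> K) :=
  [/\ forall A : finType, scalar (f A),
      forall (A B : finType) (s : A -> B), bijective s -> forall x : P A, f B (relab s x) = f A x,
      forall (A B : finType) (x : P A) (y : P B), f _ (tmul M x y) = f A x * f B y &
      f void (tone M) = 1].

Definition star (P : species) (D : double_twisted_bialgebra P)
    (f g : forall A : finType, P A -> K) : forall A : finType, P A -> K :=
  fun A x => \sum_(p <- dcop D x) f A p.1 * g A p.2.

Definition is_mor (P Q : species) (phi : forall A : finType, P A -> Q A) :=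
  (forall A : finType, linear (phi A)) /\
  (forall (A B : finType) (s : A -> B), bijective s -> forall x : P A,
      phi B (relab s x) = relab s (phi A x)).

Definition is_alg_mor (P Q : species) (MP : twisted_algebra P) (MQ : twisted_algebra Q)
    (phi : forall A : finType, P A -> Q A) :=
  [/\ is_mor phi,
      forall (A B : finType) (x : P A) (y : P B), phi _ (tmul MP x y) = tmul MQ (phi A x) (phi B y) &
      phi void (tone MP) = tone MQ].

Definition is_coalg_mor (P Q : species) (CP : twisted_coalgebra P) (CQ : twisted_coalgebra Q)
    (phi : forall A : finType, P A -> Q A) :=
  [/\ is_mor phi,
      forall (A B : finType) (x : P (A + B)%type),
        teq (tcop CQ (phi _ x)) [seq (phi A p.1, phi B p.2) | p <- tcop CP x] &
      forall x : P void, tcounit CQ (phi void x) = tcounit CP x].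

Definition is_bialg_mor (P Q : species) (BP : twisted_bialgebra P) (BQ : twisted_bialgebra Q)
    (phi : forall A : finType, P A -> Q A) :=
  is_alg_mor BP BQ phi /\ is_coalg_mor (tb_coalg BP) (tb_coalg BQ) phi.

Definition act (P Q : species) (D : double_twisted_bialgebra P)
    (phi : forall A : finType, P A -> Q A) (f : forall A : finType, P A -> K) :
    forall A : finType, P A -> Q A :=
  fun A x => \sum_(p <- dcop D x) f A p.2 *: phi A p.1.

End TwistedBialgebras.

(* Main.v *)
Require Import Defs.
From HB Require Import structures.
From mathcomp Require Import all_boot all_algebra.
Import GRing.Theory.
Local Open Scope ring_scope.
Set Implicit Arguments. Unset Strict Implicit. Unset Printing Implicit Defensive.

Section Helpers.
Variable K : fieldType.

Section Lin.
Variables (U V : lmodType K) (f : U -> V) (Hf : linear f).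
Lemma linD u v : f (u + v) = f u + f v.
Proof. by rewrite -[u in LHS]scale1r Hf scale1r. Qed.
Lemma lin0 : f 0 = 0.
Proof. have e := linD 0 0; rewrite addr0 in e.
by apply: (addrI (f 0)); rewrite addr0 -e. Qed.
Lemma linZ a u : f (a *: u) = a *: f u.
Proof. by rewrite -[a *: u]addr0 Hf lin0 addr0. Qed.
Lemma lin_sum I (r : seq I) (F : I -> U) : f (\sum_(i <- r) F i) = \sum_(i <- r) f (F i).
Proof. exact: (big_morph f linD lin0). Qed.
End Lin.

Section Scl.
Variables (U : lmodType K) (f : U -> K) (Hf : scalar f).
Lemma sclD u v : f (u + v) = f u + f v.
Proof. by rewrite -[u in LHS]scale1r Hf mul1r. Qed.
Lemma scl0 : f 0 = 0.
Proof. have e := sclD 0 0; rewrite addr0 in e.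
by apply: (addrI (f 0)); rewrite addr0 -e. Qed.
Lemma sclZ a u : f (a *: u) = a * f u.
Proof. by rewrite -[a *: u]addr0 Hf scl0 addr0. Qed.
Lemma scl_sum I (r : seq I) (F : I -> U) : f (\sum_(i <- r) F i) = \sum_(i <- r) f (F i).
Proof. exact: (big_morph f sclD scl0). Qed.
End Scl.

Section Bil.
Variables (U V W : lmodType K) (b : U -> V -> W) (Hb : bilin b).
Lemma bilZl a u v : b (a *: u) v = a *: b u v.
Proof. exact: (linZ (proj1 Hb v)). Qed.
Lemma bilZr a u v : b u (a *: v) = a *: b u v.
Proof. exact: (linZ (proj2 Hb u)). Qed.
Lemma bilDl u1 u2 v : b (u1 + u2) v = b u1 v + b u2 v.
Proof. exact: (linD (proj1 Hb v)). Qed.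
Lemma bilDr u v1 v2 : b u (v1 + v2) = b u v1 + b u v2.
Proof. exact: (linD (proj2 Hb u)). Qed.
Lemma bil_suml I (r : seq I) F v : b (\sum_(i <- r) F i) v = \sum_(i <- r) b (F i) v.
Proof. exact: (lin_sum (proj1 Hb v)). Qed.
Lemma bil_sumr I (r : seq I) F u : b u (\sum_(i <- r) F i) = \sum_(i <- r) b u (F i).
Proof. exact: (lin_sum (proj2 Hb u)). Qed.
Lemma tscale_sum a (t : seq (U * V)) :
  \sum_(p <- tscale a t) b p.1 p.2 = a *: \sum_(p <- t) b p.1 p.2.
Proof. rewrite big_map scaler_sumr; apply: eq_bigr => p _; exact: bilZl. Qed.
End Bil.

Lemma teqE (U V W : lmodType K) (t1 t2 : seq (U * V)) (b : U -> V -> W) :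
  teq t1 t2 -> bilin b -> \sum_(p <- t1) b p.1 p.2 = \sum_(p <- t2) b p.1 p.2.
Proof. by move=> H Hb; apply: H. Qed.

Lemma teq3E (U V W X : lmodType K) (t1 t2 : seq (U * V * W)) (b : U -> V -> W -> X) :
  teq3 t1 t2 -> trilin b ->
  \sum_(p <- t1) b p.1.1 p.1.2 p.2 = \sum_(p <- t2) b p.1.1 p.1.2 p.2.
Proof. by move=> H Hb; apply: H. Qed.

Section Cop.
Variables (U V1 V2 W : lmodType K) (cop : U -> seq (V1 * V2)).
Hypothesis Hc : forall a x y, teq (cop (a *: x + y)) (tscale a (cop x) ++ cop y).
Variables (b : V1 -> V2 -> W) (Hb : bilin b).
Lemma cop_lin : linear (fun z => \sum_(p <- cop z) b p.1 p.2).
Proof. by move=> a x y /=; rewrite (teqE (Hc a x y) Hb) big_cat (tscale_sum Hb). Qed.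
Lemma cop_sum I (r : seq I) F :
  \sum_(p <- cop (\sum_(i <- r) F i)) b p.1 p.2 = \sum_(i <- r) \sum_(p <- cop (F i)) b p.1 p.2.
Proof. exact: (lin_sum cop_lin). Qed.
Lemma cop_scale a x :
  \sum_(p <- cop (a *: x)) b p.1 p.2 = a *: \sum_(p <- cop x) b p.1 p.2.
Proof. exact: (linZ cop_lin). Qed.
End Cop.

Lemma bil_act (U V : lmodType K) (g : U -> V) (h : U -> K) :
  linear g -> scalar h -> bilin (fun u v => h v *: g u).
Proof.
move=> Hg Hh; split=> [v a u1 u2 | u a v1 v2] /=.
  by rewrite (linD Hg) (linZ Hg) scalerDr !scalerA (mulrC a).
by rewrite Hh scalerDl scalerA.
Qed.

End Helpers.

Theorem proposition26 (K : fieldType) (P : species K) (D : double_twisted_bialgebra P)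
    (Q : species K) :
  (* phi <- f is again a morphism of species *)
  (forall (phi : forall A : finType, P A -> Q A) (f : forall A : finType, P A -> K),
      is_mor phi -> is_char D f -> is_mor (act D phi f))
  (* the unit eps' of the monoid acts trivially *)
  /\ (forall phi : forall A : finType, P A -> Q A,
      is_mor phi -> forall (A : finType) (x : P A), act D phi (@dcounit _ _ D) x = phi A x)
  (* (phi <- f) <- g = phi <- (f * g) *)
  /\ (forall (phi : forall A : finType, P A -> Q A) (f g : forall A : finType, P A -> K),
      is_mor phi -> is_char D f -> is_char D g ->
      forall (A : finType) (x : P A), act D (act D phi f) g x = act D phi (star D f g) x)
  (* (1) *)
  /\ (forall (MQ : twisted_algebra Q) (phi : forall A : finType, P A -> Q A)
             (f : forall A : finType, P A -> K),
      is_alg_mor D MQ phi -> is_char D f -> is_alg_mor D MQ (act D phi f))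
  (* (2) *)
  /\ (forall (CQ : twisted_coalgebra Q) (phi : forall A : finType, P A -> Q A)
             (f : forall A : finType, P A -> K),
      is_coalg_mor (tb_coalg D) CQ phi -> is_char D f -> is_coalg_mor (tb_coalg D) CQ (act D phi f))
  (* (3) *)
  /\ (forall (BQ : twisted_bialgebra Q) (phi : forall A : finType, P A -> Q A)
             (f : forall A : finType, P A -> K),
      is_bialg_mor D BQ phi -> is_char D f -> is_bialg_mor D BQ (act D phi f)).
Proof.
have part0 : forall (phi : forall A : finType, P A -> Q A) (f : forall A : finType, P A -> K),
      is_mor phi -> is_char D f -> is_mor (act D phi f).
  move=> phi f [phil phin] [fl fn fm f1]; split.
    move=> A; exact: (cop_lin (@dcop_linear _ _ D A) (bil_act (phil A) (fl A))).
  move=> A B s bs x; rewrite /act.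
  rewrite (teqE (dcop_natural D bs x) (bil_act (phil B) (fl B))) big_map.
  rewrite (lin_sum (relab_linear bs)); apply: eq_bigr => p _ /=.
  by rewrite fn // phin // (linZ (relab_linear bs)).
split; first exact: part0.
split.
  move=> phi [phil phin] A x; rewrite /act.
  transitivity (phi A (\sum_(p <- dcop D x) dcounit D p.2 *: p.1)); last by rewrite dcounit_r.
  rewrite (lin_sum (phil A)); apply: eq_bigr => p _; by rewrite (linZ (phil A)).
split.
  move=> phi f g [phil phin] [fl fn fm f1] [gl gn gm g1] A x.
  pose T := fun (u v w : P A) => (f A v * g A w) *: phi A u.
  have triT : trilin T.
    split => [v w a u1 u2 | u w a v1 v2 | u v a w1 w2]; rewrite /T.
    - by rewrite (linD (phil A)) (linZ (phil A)) scalerDr !scalerA (mulrC a).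
    - by rewrite fl mulrDl scalerDl scalerA mulrA.
    - rewrite gl mulrDr scalerDl scalerA; congr (_ *: _ + _); by rewrite mulrCA.
  rewrite /act /star.
  transitivity (\sum_(p <- flatten [seq [seq (q.1, q.2, p.2) | q <- dcop D p.1] | p <- dcop D x]) T p.1.1 p.1.2 p.2).
    rewrite big_flatten big_map; apply: eq_bigr => p _.
    rewrite big_map scaler_sumr; apply: eq_bigr => q _; by rewrite /T /= scalerA mulrC.
  rewrite (teq3E (dcop_coassoc D x) triT) big_flatten big_map; apply: eq_bigr => p _.
  by rewrite big_map scaler_suml; apply: eq_bigr.
have alg : forall (MQ : twisted_algebra Q) (phi : forall A : finType, P A -> Q A)
             (f : forall A : finType, P A -> K),
      is_alg_mor D MQ phi -> is_char D f -> is_alg_mor D MQ (act D phi f).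
  move=> MQ phi f [pm pmul pone] fc; have am := part0 _ _ pm fc.
  case: pm fc => [phil phin] [fl fn fm f1].
  split => //.
  - move=> A B x y; rewrite /act.
    rewrite (teqE (dcop_mul D x y) (bil_act (phil _) (fl _))) big_allpairs_dep.
    rewrite (bil_suml (tmul_bilin MQ A B)); apply: eq_bigr => p _.
    rewrite (bilZl (tmul_bilin MQ A B)) (bil_sumr (tmul_bilin MQ A B)) scaler_sumr.
    apply: eq_bigr => q _ /=.
    by rewrite fm pmul (bilZr (tmul_bilin MQ A B)) scalerA.
  - by rewrite /act (teqE (dcop_one D) (bil_act (phil _) (fl _))) big_cons big_nil addr0 /= f1 scale1r pone.
have coalg : forall (CQ : twisted_coalgebra Q) (phi : forall A : finType, P A -> Q A)
             (f : forall A : finType, P A -> K),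
      is_coalg_mor (tb_coalg D) CQ phi -> is_char D f -> is_coalg_mor (tb_coalg D) CQ (act D phi f).
  move=> CQ phi f [pm pcop pcu] fc; have am := part0 _ _ pm fc.
  case: pm fc => [phil phin] [fl fn fm f1].
  split => //.
  - move=> A B x W b Hb.
    pose b' := fun u v => b (phi A u) (phi B v).
    have HbP : bilin b'.
      split=> [v a u1 u2 | u a v1 v2]; rewrite /b'.
      + rewrite (linD (phil A)) (linZ (phil A)); exact: (proj1 Hb).
      + rewrite (linD (phil B)) (linZ (phil B)); exact: (proj2 Hb).
    pose T := fun (u : P A) (v : P B) (w : P (A + B)%type) => f _ w *: b' u v.
    have triT : trilin T.
      split => [v w a u1 u2 | u w a v1 v2 | u v a w1 w2]; rewrite /T.
      + by rewrite (bilDl HbP) (bilZl HbP) scalerDr !scalerA (mulrC a).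
      + by rewrite (bilDr HbP) (bilZr HbP) scalerDr !scalerA (mulrC a).
      + by rewrite fl scalerDl scalerA.
    rewrite /act (cop_sum (@tcop_linear _ _ CQ A B) Hb).
    transitivity (\sum_(p <- flatten [seq [seq (q.1, q.2, p.2) | q <- tcop (tb_coalg D) p.1] | p <- dcop D x]) T p.1.1 p.1.2 p.2).
      rewrite big_flatten big_map; apply: eq_bigr => p _.
      rewrite (cop_scale (@tcop_linear _ _ CQ A B) Hb) (teqE (pcop A B p.1) Hb) !big_map scaler_sumr.
      by apply: eq_bigr.
    rewrite (teq3E (dcop_cop D x) triT) big_flatten !big_map; apply: eq_bigr => p _.
    rewrite big_allpairs_dep (bil_suml Hb); apply: eq_bigr => q _.
    rewrite (bilZl Hb) (bil_sumr Hb) scaler_sumr; apply: eq_bigr => r _.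
    by rewrite /T /= fm (bilZr Hb) scalerA.
  - move=> x; rewrite /act (scl_sum (tcounit_linear CQ)).
    have := f_equal (f void) (dcounit_eps D x).
    rewrite (scl_sum (fl void)) (sclZ (fl void)) f1 mulr1 => <-.
    apply: eq_bigr => p _.
    by rewrite (sclZ (tcounit_linear CQ)) pcu (sclZ (fl void)) mulrC.
split; first exact: alg.
split; first exact: coalg.
move=> BQ phi f [ha hc] fc; split; [exact: alg | exact: coalg].
Qed.
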